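(* Let $\Phi:\mathbb{R}^n\to\mathbb{R}$ be convex, of class $C^2$, bounded below, with $\operatorname{Argmin}\Phi\neq\emptyset$, and let $\alpha,\beta>0$. Consider $\dot x=v$, $\dot v=-\alpha v-\nabla\Phi(x)-\beta\nabla^2\Phi(x)v$. Let $W(x,v):=(\alpha\beta+1)\Phi(x)+\tfrac12\|v+\beta\nabla\Phi(x)\|^2$, fix $z\in\operatorname{Argmin}\Phi$, and for $\varepsilon>0$ let \[ W_\varepsilon(x,v):=W(x,v)+\varepsilon\Big(\tfrac{\alpha}{2}\|x-z\|^2+\langle v+\beta\nabla\Phi(x),\,x-z\rangle\Big). \] If $0<\varepsilon<\min\{\tfrac23\alpha,\ \tfrac2\beta\}$, then along every solution \[ \tfrac{d}{dt}W_\varepsilon(x(t),v(t))\le -c_\varepsilon\big(\|v(t)\|^2+\|\nabla\Phi(x(t))\|^2\big),\qquad c_\varepsilon:=\min\Big\{\alpha-\tfrac32\varepsilon,\ \beta-\tfrac{\beta^2}{2}\varepsilon\Big\}>0. \] *)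

(* Defs.v *)
From HB Require Import structures.
From mathcomp Require Import all_boot all_order all_algebra.
From mathcomp Require Import all_classical all_reals all_analysis.
Set Implicit Arguments. Unset Strict Implicit. Unset Printing Implicit Defensive.
Import Order.TTheory GRing.Theory Num.Theory.
Import numFieldNormedType.Exports.
Local Open Scope ring_scope.

Section Defs.
Variables (R : realType) (n : nat).
Local Notation V := 'rV[R]_n.

(* Euclidean inner product and squared Euclidean norm on R^n
   (the library norm on 'rV is the sup norm, so we define these explicitly). *)
Definition dotp (u w : V) : R := \sum_(i < n) u 0 i * w 0 i.
Definition sqnorm (u : V) : R := dotp u u.

Definition ebasis (i : 'I_n) : V := delta_mx 0 i.

Definition grad (Phi : V -> R) (x : V) : V := \row_i ('d Phi x (ebasis i)).

Definition hessv (Phi : V -> R) (x v : V) : V := 'd (grad Phi) x v.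

Definition C2 (Phi : V -> R) : Prop :=
  (forall x, differentiable Phi x) /\
  (forall x, differentiable (grad Phi) x) /\
  (forall i j : 'I_n, continuous (fun x => (hessv Phi x (ebasis j)) 0 i)).

Definition convex_fun (Phi : V -> R) : Prop :=
  forall (x y : V) (t : R), 0 <= t -> t <= 1 ->
    Phi ((1 - t) *: x + t *: y) <= (1 - t) * Phi x + t * Phi y.

Definition bounded_below (Phi : V -> R) : Prop :=
  exists m : R, forall x, m <= Phi x.

Definition is_argmin (Phi : V -> R) (z : V) : Prop := forall x, Phi z <= Phi x.

Definition is_solution (Phi : V -> R) (alpha beta : R) (I : set R)
    (x v : R -> V) : Prop :=
  forall t, I t ->
    derivable x t 1 /\ derive1 x t = v t /\
    derivable v t 1 /\
    derive1 v t = - (alpha *: v t) - grad Phi (x t) - beta *: hessv Phi (x t) (v t).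

Definition W (Phi : V -> R) (alpha beta : R) (x v : V) : R :=
  (alpha * beta + 1) * Phi x + 2^-1 * sqnorm (v + beta *: grad Phi x).

Definition Weps (Phi : V -> R) (alpha beta eps : R) (z : V) (x v : V) : R :=
  W Phi alpha beta x v +
  eps * (alpha / 2 * sqnorm (x - z) + dotp (v + beta *: grad Phi x) (x - z)).

End Defs.

(* Main.v *)
Require Import Defs.
From HB Require Import structures.
From mathcomp Require Import all_boot all_order all_algebra.
From mathcomp Require Import all_classical all_reals all_analysis.
From mathcomp Require Import lra.
Import Order.TTheory GRing.Theory Num.Theory.
Import numFieldNormedType.Exports.
Local Open Scope classical_set_scope.
Local Open Scope ring_scope.

Section Aux.
Context {R : realType} {n : nat}.
Local Notation V := 'rV[R]_n.

Lemma dotpDl (a b c : V) : dotp (a + b) c = dotp a c + dotp b c.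
Proof. by rewrite /dotp -big_split; apply: eq_bigr => i _; rewrite mxE mulrDl. Qed.
Lemma dotpC (a b : V) : dotp a b = dotp b a.
Proof. by apply: eq_bigr => i _; rewrite mulrC. Qed.
Lemma dotpDr (a b c : V) : dotp c (a + b) = dotp c a + dotp c b.
Proof. by rewrite dotpC dotpDl !(dotpC c). Qed.
Lemma dotpZl k (a c : V) : dotp (k *: a) c = k * dotp a c.
Proof. by rewrite /dotp mulr_sumr; apply: eq_bigr => i _; rewrite mxE mulrA. Qed.
Lemma dotpZr k (a c : V) : dotp c (k *: a) = k * dotp c a.
Proof. by rewrite dotpC dotpZl dotpC. Qed.
Lemma dotpNl (a c : V) : dotp (- a) c = - dotp a c.
Proof. by rewrite -scaleN1r dotpZl mulN1r. Qed.
Lemma dotpNr (a c : V) : dotp c (- a) = - dotp c a.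
Proof. by rewrite dotpC dotpNl dotpC. Qed.
Lemma dotp0r (c : V) : dotp c 0 = 0.
Proof. by rewrite /dotp big1 // => i _; rewrite mxE mulr0. Qed.
Lemma dotpp_ge0 (a : V) : 0 <= dotp a a.
Proof. by apply: sumr_ge0 => i _; rewrite -expr2 sqr_ge0. Qed.

Lemma diff_dotp (Phi : V -> R) y h : 'd Phi y h = dotp (grad Phi y) h.
Proof.
rewrite {1}(row_sum_delta h) linear_sum /dotp; apply: eq_bigr => i _.
by rewrite linearZ /= mxE mulrC.
Qed.

Lemma is_derive_comp {W : normedModType R} {F : V -> W} {y : R -> V} {t : R} {dy : V} :
  differentiable F (y t) -> is_derive t 1 y dy ->
  is_derive t 1 (fun s => F (y s)) ('d F (y t) dy).
Proof.
move=> dF hy.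
have dyt : differentiable y t by apply/derivable1_diffP; by case: hy.
have dc : differentiable (F \o y) t by exact: differentiable_comp.
apply: DeriveDef; first exact/derivable1_diffP.
rewrite (deriveE (f := F \o y)) // (diff_comp dyt dF) /=.
by rewrite -(deriveE (f := y)) //; case: hy => _ ->.
Qed.

Lemma is_derive_coord {y : R -> V} {t : R} {dy : V} (i : 'I_n) :
  is_derive t 1 y dy -> is_derive t 1 (fun s => y s 0 i) (dy 0 i).
Proof.
move=> h; have dy' : derivable y t 1 by case: h.
apply: DeriveDef; first by move/derivable_mxP: dy'; apply.
by case: h => _ <-; rewrite derive_mx // mxE.
Qed.

Lemma isdD {W : normedModType R} {f g : R -> W} {t : R} {df dg : W} :
  is_derive t 1 f df -> is_derive t 1 g dg ->
  is_derive t 1 (fun s => f s + g s) (df + dg).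
Proof. by move=> ? ?; exact: is_deriveD. Qed.

Lemma isdB {W : normedModType R} {f g : R -> W} {t : R} {df dg : W} :
  is_derive t 1 f df -> is_derive t 1 g dg ->
  is_derive t 1 (fun s => f s - g s) (df - dg).
Proof. by move=> ? ?; exact: is_deriveB. Qed.

Lemma isdZ {W : normedModType R} {f : R -> W} (k : R) {t : R} {df : W} :
  is_derive t 1 f df -> is_derive t 1 (fun s => k *: f s) (k *: df).
Proof. by move=> ?; exact: is_deriveZ. Qed.

Lemma isdMc {f : R -> R} (k : R) {t : R} {df : R} :
  is_derive t 1 f df -> is_derive t 1 (fun s => k * f s) (k * df).
Proof. by move=> ?; exact: is_deriveZ. Qed.

Lemma isdM {f g : R -> R} {t : R} {df dg : R} :
  is_derive t 1 f df -> is_derive t 1 g dg ->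
  is_derive t 1 (fun s => f s * g s) (df * g t + f t * dg).
Proof.
move=> hf hg; have := @is_deriveM R R f g t 1 df dg hf hg.
move=> H; refine (is_derive_eq H _).
by rewrite addrC /GRing.scale /= mulrC.
Qed.

Lemma is_derive_dotp {a b : R -> V} {t : R} {da db : V} :
  is_derive t 1 a da -> is_derive t 1 b db ->
  is_derive t 1 (fun s => dotp (a s) (b s)) (dotp da (b t) + dotp (a t) db).
Proof.
move=> ha hb; rewrite /dotp -big_split /=.
have H : is_derive t 1 (\sum_(i < n) (fun s => a s 0 i * b s 0 i))
    (\sum_(i < n) (da 0 i * b t 0 i + a t 0 i * db 0 i)).
  apply: is_derive_sum => i.
  refine (isdM (is_derive_coord i ha) (is_derive_coord i hb)).
by rewrite fct_sumE in H.
Qed.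

Lemma convex_grad (Phi : V -> R) y z :
  convex_fun Phi -> is_argmin Phi z -> differentiable Phi y ->
  'd Phi y (z - y) <= 0.
Proof.
move=> cvx zmin dP.
have dd : derivable Phi y (z - y) := diff_derivable (v := z - y) dP.
rewrite -deriveE // /derive.
set f := fun h : R => h^-1 *: (Phi (h *: (z - y) + y) - Phi y).
have cf : cvg (f @ 0^') := dd.
rewrite (cvg_at_rightE f 0 cf).
apply: limr_le.
  apply/cvg_ex; exists (lim (f @ 0^')); apply: cvg_trans cf; apply: cvg_app.
  move=> A [e egt0 Ae]; exists e => // x xe xgt0; apply: Ae => //.
  exact/lt0r_neq0.
near=> h.
have h0 : 0 < h by near: h; exists 1 => /=.
have h1 : h < 1.
  near: h; exists 1 => //= h.
  by rewrite /ball_ /= sub0r normrN => hh _; exact: le_lt_trans (ler_norm h) hh.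
rewrite /f; apply: mulr_ge0_le0; first by rewrite invr_ge0 ltW.
have -> : h *: (z - y) + y = (1 - h) *: y + h *: z.
  by rewrite scalerBr scalerBl scale1r addrC addrCA addrC.
rewrite subr_le0; apply: le_trans (cvx _ _ _ (ltW h0) (ltW h1)) _.
have := zmin y; nra.
Unshelve. all: by end_near. Qed.

End Aux.

Theorem mainTheorem11 (R : realType) (n : nat) (Phi : 'rV[R]_n -> R)
  (alpha beta eps : R) (z : 'rV[R]_n) (I : set R) (x v : R -> 'rV[R]_n) :
  convex_fun Phi -> C2 Phi -> bounded_below Phi ->
  is_argmin Phi z ->
  0 < alpha -> 0 < beta ->
  0 < eps -> eps < Num.min (2 / 3 * alpha) (2 / beta) ->
  open I -> is_solution Phi alpha beta I x v ->
  let c := Num.min (alpha - 3 / 2 * eps) (beta - beta ^+ 2 / 2 * eps) in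
  0 < c /\
  forall t, I t ->
    derivable (fun s => Weps Phi alpha beta eps z (x s) (v s)) t 1 /\
    derive1 (fun s => Weps Phi alpha beta eps z (x s) (v s)) t
      <= - c * (sqnorm (v t) + sqnorm (grad Phi (x t))).
Proof.
move=> cvx [dPhi [dgrad _]] _ zmin a0 b0 e0 emin oI sol c.
move: emin; rewrite lt_min => /andP[e1 e2].
have eb : eps * beta < 2 by rewrite -ltr_pdivlMr.
have c1 : c <= alpha - 3 / 2 * eps by rewrite /c ge_min lexx.
have c2 : c <= beta - beta ^+ 2 / 2 * eps by rewrite /c ge_min lexx orbT.
split.
  rewrite /c lt_min; apply/andP; split; first lra.
  rewrite expr2; nra.
move=> t It; have [dx [x' [dv v']]] := sol t It.
have hx : is_derive t 1 x (v t) by apply: DeriveDef => //; rewrite -derive1E.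
have hv : is_derive t 1 v (- (alpha *: v t) - grad Phi (x t)
    - beta *: hessv Phi (x t) (v t)) by apply: DeriveDef => //; rewrite -derive1E.
have hG : is_derive t 1 (fun s => grad Phi (x s)) (hessv Phi (x t) (v t)).
  exact: is_derive_comp (dgrad (x t)) hx.
have hP := is_derive_comp (dPhi (x t)) hx.
have hU := isdD hv (isdZ beta hG).
have hz : is_derive t 1 (fun _ : R => z) 0 by exact: is_derive_cst.
have hE := isdB hx hz.
have hW := isdD (isdD (isdMc (alpha * beta + 1) hP) (isdMc (2^-1) (is_derive_dotp hU hU)))
  (isdMc eps (isdD (isdMc (alpha / 2) (is_derive_dotp hE hE)) (is_derive_dotp hU hE))).
have [hWd hWv] := hW.
split; first exact: hWd.
rewrite derive1E /Weps /W /sqnorm hWv.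
rewrite subrK subr0 diff_dotp.
have cv := @convex_grad _ _ Phi (x t) z cvx zmin (dPhi (x t)).
rewrite diff_dotp -opprB dotpNr oppr_le0 in cv.
set g := grad Phi (x t) in cv *.
set E := x t - z in cv *.
set w := v t.
have key := dotpp_ge0 (w - beta *: g).
have vv0 := dotpp_ge0 w.
have gg0 := dotpp_ge0 g.
rewrite !(dotpDl, dotpDr, dotpNl, dotpNr, dotpZl, dotpZr) in key cv *.
rewrite ?(dotpC (x t) w) ?(dotpC z w) ?(dotpC g w) in key cv *.
have p1 := mulr_ge0 (ltW e0) key.
have p2 : 0 <= (alpha - 3 / 2 * eps - c) * dotp w w by rewrite mulr_ge0 // subr_ge0.
have p3 : 0 <= (beta - beta ^+ 2 / 2 * eps - c) * dotp g g by rewrite mulr_ge0 // subr_ge0.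
have p4 := mulr_ge0 (ltW e0) cv.
rewrite expr2 in p3.
nra.
Qed.
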